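(* Let $\Delta$ be a finite tree, $\mathbb{G}=\mathbb{G}(\Delta)$ and $H\le\mathbb{G}$ a finite index subgroup. Let $p$ be an edge of $\Psi(H)$ joining vertices $v_1$ and $v_2$. Then $$\frac{L(v_1)}{l_{v_1}(p)}=\frac{L(v_2)}{l_{v_2}(p)}=r$$ for some positive integer $r$.
   Context: $\mathbb{G}(\Delta)$ is the right-angled Artin group with generators the vertices of $\Delta$ and relations $[u,v]=1$ for each edge. Conjugation: $g^h=hgh^{-1}$. $\widetilde{\Delta}^e$ (reduced extension graph) has as vertices the elements conjugate to canonical generators corresponding to vertices of degree greater than 1, adjacent iff they commute; $\mathbb{G}$ acts by conjugation. $\Psi(H)=H\backslash\widetilde{\Delta}^e$ is the quotient graph with quotient map $\gamma_H$. Labels: for a vertex $w$ of $\widetilde{\Delta}^e$, $\overline{L}(w)$ is the least positive $k$ with $w^k\in H$; for an edge $f$ joining $w_1,w_2$, $\overline{l}_{w_1}(f)$ is the least positive $k$ such that $w_1^kw_2^l\in H$ for some integer $l$. These are invariant under conjugation by $H$, and $L(v)=\overline{L}(w)$ for any $w$ with $\gamma_H(w)=v$, $l_{v_1}(p)=\overline{l}_{w_1}(f)$ for any edge $f$ with $\gamma_H(f)=p$ and endpoint $w_1$ with $\gamma_H(w_1)=v_1$. *)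

(* Defs.v *)
From mathcomp Require Import all_boot all_order all_algebra.
From Stdlib Require Import Relations.
Set Implicit Arguments. Unset Strict Implicit. Unset Printing Implicit Defensive.

Definition simple_graph (V : finType) (e : rel V) :=
  ssrbool.symmetric e /\ ssrbool.irreflexive e.

Definition is_tree (V : finType) (e : rel V) : Prop :=
  [/\ simple_graph e, 0 < #|V|,
      (forall x y : V, connect e x y) &
      (forall c : seq V, 3 <= size c -> uniq c -> ~~ cycle e c)].

Definition degree (V : finType) (e : rel V) (v : V) : nat := #|[set u | e v u]|.

(* Elements are words over the letters v^(+1) = (v,false), v^(-1) = (v,true),
   taken up to the equivalence generated by free cancellation and by the
   defining relations [u,v] = 1 for each edge uv. *)
Section RAAG.
Variables (V : finType) (e : rel V).

Definition letter := (V * bool)%type.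
Definition word := seq letter.
Definition linv (a : letter) : letter := (a.1, ~~ a.2).

Inductive raag_step : word -> word -> Prop :=
| step_free (u w : word) (a : letter) :
    raag_step (u ++ a :: linv a :: w) (u ++ w)
| step_comm (u w : word) (a b : letter) :
    e a.1 b.1 -> raag_step (u ++ a :: b :: w) (u ++ b :: a :: w).

Definition raag_eq : word -> word -> Prop := clos_refl_sym_trans word raag_step.

Definition winv (x : word) : word := rev (map linv x).
Fixpoint wpow (x : word) (n : nat) : word :=
  if n is n'.+1 then x ++ wpow x n' else [::].
Definition wzpow (x : word) (z : int) : word :=
  match z with Posz n => wpow x n | Negz n => winv (wpow x n.+1) end.

Definition gen (v : V) : word := [:: (v, false)].

Definition conj (g h : word) : word := h ++ g ++ winv h.

Definition is_subgroup (H : word -> Prop) : Prop :=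
  [/\ (forall x y, raag_eq x y -> H x -> H y),
      H [::],
      (forall x y, H x -> H y -> H (x ++ y)) &
      (forall x, H x -> H (winv x))].

Definition finite_index (H : word -> Prop) : Prop :=
  exists T : seq word, forall g : word,
    exists t h, t \in T /\ H h /\ raag_eq g (t ++ h).

(* vertices of the reduced extension graph: conjugates of canonical generators
   of vertices of degree > 1 *)
Definition ext_vertex (w : word) : Prop :=
  exists (v : V) (h : word), 1 < degree e v /\ raag_eq w (conj (gen v) h).

(* adjacency in the reduced extension graph: distinct and commuting *)
Definition ext_adj (w1 w2 : word) : Prop :=
  ~ raag_eq w1 w2 /\ raag_eq (w1 ++ w2) (w2 ++ w1).

(* Lbar(w) = k : k is the least positive integer with w^k in H *)
Definition Lbar_is (H : word -> Prop) (w : word) (k : nat) : Prop :=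
  0 < k /\ H (wpow w k) /\ (forall j, 0 < j -> H (wpow w j) -> k <= j).

(* lbar_{w1}(f) = k for the edge f joining w1 and w2 : k is the least positive
   integer such that w1^k w2^l in H for some integer l *)
Definition lbar_is (H : word -> Prop) (w1 w2 : word) (k : nat) : Prop :=
  0 < k /\ (exists l : int, H (wpow w1 k ++ wzpow w2 l)) /\
  (forall j, 0 < j -> (exists l : int, H (wpow w1 j ++ wzpow w2 l)) -> k <= j).

End RAAG.

(* Main.v *)
Require Import Defs.
From mathcomp Require Import all_boot all_order all_algebra zify.
From Stdlib Require Import Relations.
Import GRing.Theory Num.Theory.
Set Implicit Arguments. Unset Strict Implicit. Unset Printing Implicit Defensive.

Section Words.
Variables (V : finType) (e : rel V).
Local Notation req := (raag_eq e).
Implicit Types (x y z p q : word V).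

Lemma req_refl x : req x x. Proof. exact: rst_refl. Qed.
Lemma req_sym x y : req x y -> req y x. Proof. exact: rst_sym. Qed.
Lemma req_trans x y z : req x y -> req y z -> req x z. Proof. exact: rst_trans. Qed.

Lemma step_cat p q x y : raag_step e x y -> raag_step e (p ++ x ++ q) (p ++ y ++ q).
Proof.
case=> [u w a|u w a b eab].
  have -> : p ++ (u ++ [:: a, linv a & w]) ++ q = (p ++ u) ++ [:: a, linv a & w ++ q].
    by rewrite -!catA.
  have -> : p ++ (u ++ w) ++ q = (p ++ u) ++ (w ++ q) by rewrite -!catA.
  exact: step_free.
have -> : p ++ (u ++ [:: a, b & w]) ++ q = (p ++ u) ++ [:: a, b & w ++ q] by rewrite -!catA.
have -> : p ++ (u ++ [:: b, a & w]) ++ q = (p ++ u) ++ [:: b, a & w ++ q] by rewrite -!catA.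
exact: step_comm.
Qed.

Lemma req_cat p q x y : req x y -> req (p ++ x ++ q) (p ++ y ++ q).
Proof.
elim=> [x' y' s|x'|x' y' _ IH|x' y' z' _ IH1 _ IH2].
- by apply: rst_step; apply: step_cat.
- exact: req_refl.
- exact: req_sym.
- exact: req_trans IH2.
Qed.

Lemma req_catl q x y : req x y -> req (x ++ q) (y ++ q).
Proof. by move=> h; have := req_cat [::] q h. Qed.
Lemma req_catr p x y : req x y -> req (p ++ x) (p ++ y).
Proof. by move=> h; have := req_cat p [::] h; rewrite !cats0. Qed.
Lemma req_cat2 x x' y y' : req x x' -> req y y' -> req (x ++ y) (x' ++ y').
Proof. by move=> h1 h2; apply: req_trans (req_catl _ h1) (req_catr _ h2). Qed.

Lemma winv_cat x y : winv (x ++ y) = winv y ++ winv x.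
Proof. by rewrite /winv map_cat rev_cat. Qed.
Lemma winv_cons a x : winv (a :: x) = winv x ++ [:: linv a].
Proof. by rewrite /winv /= rev_cons cats1. Qed.
Lemma winvK x : winv (winv x) = x.
Proof.
rewrite /winv map_rev revK -map_comp.
rewrite -[RHS]map_id; apply: eq_map => -[a b] /=; by rewrite /linv /= negbK.
Qed.

Lemma cancelR x : req (x ++ winv x) [::].
Proof.
elim: x => [|a x IH] /=; first exact: req_refl.
rewrite winv_cons catA.
have h := req_cat [:: a] [:: linv a] IH.
rewrite /= in h. apply: (req_trans h).
apply: rst_step; exact: (step_free e [::] [::] a).
Qed.
Lemma cancelL x : req (winv x ++ x) [::].
Proof. by have := cancelR (winv x); rewrite winvK. Qed.

Lemma wpowSr x n : wpow x n.+1 = wpow x n ++ x.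
Proof. elim: n => [|n IH]; first by rewrite /= cats0. by change (x ++ wpow x n.+1 = (x ++ wpow x n) ++ x); rewrite IH catA. Qed.

Lemma zpow_succ x a : req (wzpow x (a + 1)) (wzpow x a ++ x).
Proof.
case: a => [n|n].
  have -> : (Posz n + 1)%R = Posz n.+1 by rewrite -PoszD addn1.
  rewrite /= -wpowSr; exact: req_refl.
case: n => [|m].
  have -> : (Negz 0 + 1)%R = 0 by [].
  rewrite /= cats0 /winv /=; exact: req_sym (cancelL x).
have -> : (Negz m.+1 + 1)%R = Negz m by rewrite !NegzE; lia.
rewrite /wzpow -/(wpow x m.+1) (_ : wpow x m.+2 = x ++ wpow x m.+1) // winv_cat -catA.
have h := req_catr (winv (wpow x m.+1)) (cancelL x).
rewrite cats0 in h; exact: req_sym h.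
Qed.

Lemma zpow_pred x a : req (wzpow x (a - 1)) (wzpow x a ++ winv x).
Proof.
have E := zpow_succ x (a - 1); rewrite subrK in E.
have h := req_catr (wzpow x (a - 1)) (cancelR x); rewrite cats0 in h.
apply: (req_trans (req_sym h)); rewrite catA; exact: req_sym (req_catl (winv x) E).
Qed.

Lemma zpow_add x a b : req (wzpow x (a + b)) (wzpow x a ++ wzpow x b).
Proof.
case: b => n.
  elim: n => [|n IH]; first by rewrite addr0 cats0; exact: req_refl.
  have -> : (a + Posz n.+1 = (a + Posz n) + 1)%R by lia.
  apply: (req_trans (zpow_succ _ _)).
  apply: (req_trans (req_catl _ IH)).
  by rewrite -catA /= -wpowSr; exact: req_refl.
elim: n => [|n IH].
  have -> : (a + Negz 0 = a - 1)%R by rewrite NegzE.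
  have -> : wzpow x (Negz 0) = winv x by rewrite /= cats0.
  exact: zpow_pred.
have -> : (a + Negz n.+1 = (a + Negz n) - 1)%R by rewrite !NegzE; lia.
apply: (req_trans (zpow_pred _ _)).
apply: (req_trans (req_catl _ IH)).
rewrite -catA /wzpow (_ : wpow x n.+2 = x ++ wpow x n.+1) // winv_cat.
exact: req_refl.
Qed.

Lemma zpow_inv x a : req (winv (wzpow x a)) (wzpow x (- a)).
Proof.
apply: (req_trans (_ : req _ ((wzpow x (- a) ++ wzpow x a) ++ winv (wzpow x a)))).
  apply: req_sym; apply: (req_trans (req_catl _ (req_sym (zpow_add x (- a) a)))).
  by rewrite addNr /=; exact: req_refl.
rewrite -catA; have h := req_catr (wzpow x (- a)) (cancelR (wzpow x a)).
by rewrite cats0 in h.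
Qed.

Definition wcomm x y := req (x ++ y) (y ++ x).

Lemma wcomm_sym x y : wcomm x y -> wcomm y x.
Proof. exact: req_sym. Qed.

Lemma wcomm_inv x y : wcomm x y -> wcomm x (winv y).
Proof.
move=> h; apply: req_sym.
have s1 : req (winv y ++ x) (winv y ++ (x ++ y) ++ winv y).
  have h2 := req_catr (winv y ++ x) (cancelR y).
  rewrite cats0 in h2; apply: (req_trans (req_sym h2)).
  by rewrite -!catA; exact: req_refl.
apply: (req_trans s1).
apply: (req_trans (req_cat (winv y) (winv y) h)).
have h3 := req_catl (x ++ winv y) (cancelL y).
by move: h3; rewrite -!catA /=.
Qed.

Lemma wcomm_pow x y n : wcomm x y -> wcomm x (wpow y n).
Proof.
move=> h; elim: n => [|n IH]; first by rewrite /wcomm /= cats0; exact: req_refl.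
rewrite /wcomm catA; apply: (req_trans (req_catl _ h)).
rewrite -!catA; exact: req_catr.
Qed.

Lemma wcomm_zpow x y b : wcomm x y -> wcomm x (wzpow y b).
Proof.
move=> h; case: b => n; first exact: wcomm_pow.
exact/wcomm_inv/wcomm_pow.
Qed.

Lemma wcomm_zpow2 x y a b : wcomm x y -> wcomm (wzpow x a) (wzpow y b).
Proof.
move=> h; apply: wcomm_sym; apply: wcomm_zpow; apply: wcomm_sym; exact: wcomm_zpow.
Qed.

End Words.
Section Lat.
Local Open Scope ring_scope.

Lemma subgrp_mul (S : int -> Prop) (S0 : S 0) (Sadd : forall a b, S a -> S b -> S (a + b))
  (Sneg : forall a, S a -> S (- a)) x k : S x -> S (k * x).
Proof.
move=> Sx.
have Hn : forall n : nat, S (n%:Z * x).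
  elim=> [|n IH]; first by rewrite mul0r.
  have -> : (n.+1%:Z * x) = x + n%:Z * x by lia.
  exact: Sadd.
case: k => n; first exact: Hn.
have -> : (Negz n * x) = - (n.+1%:Z * x) by rewrite NegzE mulNr.
exact/Sneg/Hn.
Qed.

Lemma subgrp_dvd (S : int -> Prop) (S0 : S 0) (Sadd : forall a b, S a -> S b -> S (a + b))
  (Sneg : forall a, S a -> S (- a)) (l : nat) :
  (0 < l)%N -> S l%:Z -> (forall j : nat, (0 < j)%N -> S j%:Z -> (l <= j)%N) ->
  forall a, S a -> exists k : int, a = k * l%:Z.
Proof.
move=> lpos Sl lmin a Sa.
have l0 : l%:Z != 0 by lia.
have r0 := modz_ge0 a l0.
have r1 := ltz_mod a l0.
have e := divz_eq a l%:Z.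
have Sr : S (a %% l%:Z)%Z.
  have -> : (a %% l%:Z)%Z = a + - ((a %/ l%:Z)%Z * l%:Z) by lia.
  exact: (Sadd _ _ Sa (Sneg _ (@subgrp_mul S S0 Sadd Sneg _ (a %/ l%:Z)%Z Sl))).
exists (a %/ l%:Z)%Z.
move: r0 r1 Sr e; case: (a %% l%:Z)%Z => [j|j] r0 r1 Sr e; last by lia.
case: j r0 r1 Sr e => [|j] r0 r1 Sr e; first by lia.
have := lmin j.+1 isT Sr. move: r1; rewrite ger0_norm //; lia.
Qed.

Lemma pair_mul (P : int -> int -> Prop) (P0 : P 0 0)
  (Padd : forall a b a' b', P a b -> P a' b' -> P (a + a') (b + b'))
  (Pneg : forall a b, P a b -> P (- a) (- b)) a b k : P a b -> P (k * a) (k * b).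
Proof.
move=> Pab.
have Hn : forall n : nat, P (n%:Z * a) (n%:Z * b).
  elim=> [|n IH]; first by rewrite !mul0r.
  have -> : (n.+1%:Z * a) = a + n%:Z * a by lia.
  have -> : (n.+1%:Z * b) = b + n%:Z * b by lia.
  exact: Padd.
case: k => n; first exact: Hn.
rewrite NegzE !mulNr; exact/Pneg/Hn.
Qed.

Lemma Ptr (P : int -> int -> Prop) a b a' b' : P a b -> a = a' -> b = b' -> P a' b'.
Proof. by move=> H <- <-. Qed.
Arguments Ptr {P a b a' b'}.

Lemma core (P : int -> int -> Prop) (P0 : P 0 0)
  (Padd : forall a b a' b', P a b -> P a' b' -> P (a + a') (b + b'))
  (Pneg : forall a b, P a b -> P (- a) (- b)) (L1 l1 L2 l2 : nat) :
  (0 < L1)%N -> P L1%:Z 0 -> (forall j : nat, (0 < j)%N -> P j%:Z 0 -> (L1 <= j)%N) ->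
  (0 < l1)%N -> (exists b, P l1%:Z b) -> (forall j : nat, (0 < j)%N -> (exists b, P j%:Z b) -> (l1 <= j)%N) ->
  (0 < L2)%N -> P 0 L2%:Z -> (forall j : nat, (0 < j)%N -> P 0 j%:Z -> (L2 <= j)%N) ->
  (0 < l2)%N -> (exists a, P a l2%:Z) -> (forall j : nat, (0 < j)%N -> (exists a, P a j%:Z) -> (l2 <= j)%N) ->
  (l1 %| L1)%N /\ (L1 * l2 %| L2 * l1)%N.
Proof.
move=> L1p PL1 L1m l1p [b1 Pb1] l1m L2p PL2 L2m l2p [c Pc] l2m.
have S1_0 : exists b, P 0 b by exists 0.
have S1_add : forall a a', (exists b, P a b) -> (exists b, P a' b) -> exists b, P (a + a') b.
  by move=> a a' [b Hb] [b' Hb']; exists (b + b'); apply: Padd.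
have S1_neg : forall a, (exists b, P a b) -> exists b, P (- a) b.
  by move=> a [b Hb]; exists (- b); apply: Pneg.
have S2_0 : exists a, P a 0 by exists 0.
have S2_add : forall b b', (exists a, P a b) -> (exists a, P a b') -> exists a, P a (b + b').
  by move=> b b' [a Ha] [a' Ha']; exists (a + a'); apply: Padd.
have S2_neg : forall b, (exists a, P a b) -> exists a, P a (- b).
  by move=> b [a Ha]; exists (- a); apply: Pneg.
have T1_add : forall a a', P a 0 -> P a' 0 -> P (a + a') 0.
  by move=> a a' Ha Ha'; apply: (Ptr (Padd _ _ _ _ Ha Ha')) => //; rewrite addr0.
have T1_neg : forall a, P a 0 -> P (- a) 0.
  by move=> a Ha; apply: (Ptr (Pneg _ _ Ha)) => //; rewrite oppr0.
have dvd1 := @subgrp_dvd (fun a => exists b, P a b) S1_0 S1_add S1_neg l1 l1p (ex_intro _ b1 Pb1) l1m.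
have dvd2 := @subgrp_dvd (fun b => exists a, P a b) S2_0 S2_add S2_neg l2 l2p (ex_intro _ c Pc) l2m.
have dvdL1 := @subgrp_dvd (fun a => P a 0) P0 T1_add T1_neg L1 L1p PL1 L1m.
have [d Ed] := dvd1 L1%:Z (ex_intro _ 0 PL1).
have [e Ee] := dvd2 L2%:Z (ex_intro _ 0 PL2).
have [s Es] := dvd2 b1 (ex_intro _ l1%:Z Pb1).
have [t Et] := dvd1 c (ex_intro _ l2%:Z Pc).
have P1 : P (l1%:Z + - (s * c)) 0.
  apply: (Ptr (Padd _ _ _ _ Pb1 (Pneg _ _ (@pair_mul P P0 Padd Pneg _ _ s Pc)))) => //.
  rewrite Es; lia.
have P2 : P (e * c + - 0) 0.
  apply: (Ptr (Padd _ _ _ _ (@pair_mul P P0 Padd Pneg _ _ e Pc) (Pneg _ _ PL2))) => //.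
  rewrite Ee; lia.
have [k1 Ek1] := dvdL1 _ P1.
have [k2 Ek2] := dvdL1 _ P2.
have l1n0 : l1%:Z != 0 by lia.
have E1 : 1 - s * t = k1 * d.
  apply: (mulIf l1n0). rewrite mulrBl mul1r -mulrA -Et -mulrA -Ed -Ek1. lia.
have E2 : e * t = k2 * d.
  apply: (mulIf l1n0). rewrite -mulrA -Et -mulrA -Ed -Ek2. lia.
have E3 : e = (e * k1 + s * k2) * d.
  rewrite mulrDl -mulrA -E1 -mulrA -E2. lia.
have dpos : 0 < d by nia.
have epos : 0 < e by nia.
have Kpos : 0 < e * k1 + s * k2 by nia.
move: Kpos E3; move: (e * k1 + s * k2) => K Kpos E3.
clear E1 E2 Ek1 Ek2 P1 P2 Es Et.
move: Ed Ee E3.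
case: d dpos => // dn _; case: e epos => // en _.
case: K Kpos => // Kn _.
rewrite -!PoszM => /eqP; rewrite eqz_nat => /eqP Ed /eqP; rewrite eqz_nat => /eqP Ee /eqP; rewrite eqz_nat => /eqP E3.
split; first by apply/dvdnP; exists dn.
apply/dvdnP; exists Kn. rewrite Ee Ed E3. lia.
Qed.
End Lat.

Theorem mainTheorem16 (V : finType) (e : rel V) (Htree : is_tree e)
  (H : word V -> Prop) (Hsub : is_subgroup e H) (Hfin : finite_index e H)
  (w1 w2 : word V)
  (Hw1 : ext_vertex e w1) (Hw2 : ext_vertex e w2) (Hadj : ext_adj e w1 w2)
  (L1 L2 l1 l2 : nat)
  (HL1 : Lbar_is H w1 L1) (HL2 : Lbar_is H w2 L2)
  (Hl1 : lbar_is H w1 w2 l1) (Hl2 : lbar_is H w2 w1 l2) :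
  exists r : nat, 0 < r /\ L1 = r * l1 /\ L2 = r * l2.
Proof.
have [Hreq H0 Hcat Hinv] := Hsub.
have cm : wcomm e w1 w2 := Hadj.2.
pose P (a b : int) := H (wzpow w1 a ++ wzpow w2 b).
have P0 : P 0%R 0%R by [].
have Padd : forall a b a' b', P a b -> P a' b' -> P (a + a')%R (b + b')%R.
  move=> a b a' b' h1 h2; apply: (Hreq _ _ _ (Hcat _ _ h1 h2)).
  have c := wcomm_zpow2 b a' (wcomm_sym cm).
  rewrite -catA (catA (wzpow w2 b)).
  apply: (req_trans (req_catr _ (req_catl _ c))).
  rewrite -catA catA.
  exact: req_cat2 (req_sym (zpow_add e w1 a a')) (req_sym (zpow_add e w2 b b')).
have Pneg : forall a b, P a b -> P (- a)%R (- b)%R.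
  move=> a b h; apply: (Hreq _ _ _ (Hinv _ h)).
  rewrite winv_cat.
  apply: (req_trans (req_cat2 (zpow_inv e w2 b) (zpow_inv e w1 a))).
  exact: wcomm_zpow2 (wcomm_sym cm).
have [L1p [HL1' L1m]] := HL1.
have [L2p [HL2' L2m]] := HL2.
have [l1p [Hl1' l1m]] := Hl1.
have [l2p [Hl2' l2m]] := Hl2.
have swapP : forall (a b : int), P a b <-> H (wzpow w2 b ++ wzpow w1 a).
  move=> a b; split => h; apply: (Hreq _ _ _ h); last exact: wcomm_zpow2 (wcomm_sym cm).
  exact: wcomm_zpow2 cm.
have A1 : P (Posz L1) 0%R by rewrite /P /= cats0.
have A2 : forall j : nat, 0 < j -> P (Posz j) 0%R -> L1 <= j.
  by move=> j jp; rewrite /P /= cats0; apply: L1m.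
have A3 : P 0%R (Posz L2) by [].
have A4 : forall j : nat, 0 < j -> P 0%R (Posz j) -> L2 <= j by [].
have A5 : exists b, P (Posz l1) b by [].
have A6 : forall j : nat, 0 < j -> (exists b, P (Posz j) b) -> l1 <= j by [].
have A7 : exists a, P a (Posz l2).
  by case: Hl2' => l h; exists l; exact: (proj2 (swapP l (Posz l2)) h).
have A8 : forall j : nat, 0 < j -> (exists a, P a (Posz j)) -> l2 <= j.
  by move=> j jp [a h]; apply: l2m => //; exists a; exact: (proj1 (swapP a (Posz j)) h).
have [d1 d2] := core P0 Padd Pneg L1p A1 A2 l1p A5 A6 L2p A3 A4 l2p A7 A8.
pose Q (a b : int) := P b a.
have Q0 : Q 0%R 0%R by [].
have Qadd : forall a b a' b', Q a b -> Q a' b' -> Q (a + a')%R (b + b')%R.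
  by move=> a b a' b' h1 h2; apply: Padd.
have Qneg : forall a b, Q a b -> Q (- a)%R (- b)%R by move=> a b h; apply: Pneg.
have [_ d3] := core Q0 Qadd Qneg L2p A3 A4 l2p A7 A8 L1p A1 A2 l1p A5 A6.
have Eq : L1 * l2 = L2 * l1 by apply/eqP; rewrite eqn_dvd d2 d3.
exists (L1 %/ l1); have EL1 : L1 = L1 %/ l1 * l1 by rewrite divnK.
split; first by rewrite divn_gt0 // dvdn_leq.
split => //.
apply/eqP; rewrite -(eqn_pmul2r l1p) -Eq {1}EL1 mulnAC //.
Qed.
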